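(* Let $G=(N,E)$ be a finite simple undirected graph with at least one edge, and consider the coordination game on $G$ in which every player has strategy set $\{1,2\}$. With the solution set being the set $\mathrm{NE}$ of pure Nash equilibria, $$\mathrm{PoSTA}\ge \frac12-\frac{|N|}{2|E|}\qquad\text{and}\qquad \mathrm{PoA}\ge\frac12,$$ and both bounds are tight (there are graphs for which they hold with equality).
   Context: The coordination game on $G=(N,E)$: players are the nodes, each player $i$ chooses a colour $s_i\in\{1,2\}$, and $u_i(s)=|\{j\in\mathrm{Neighb}(i): s_j=s_i\}|$, where $\mathrm{Neighb}(i)$ is the set of neighbours of $i$. $\mathrm{sw}(s)=\sum_i u_i(s)$. For a solution set $D$: a transition is a profile $t$ such that each $t_i$ equals $d_i$ for some $d\in D$. $\mathrm{BR}_i(s_{-i})$ is the set of best responses of $i$. A stable transition is a transition $s$ such that for every $i$ with $s_i\notin\mathrm{BR}_i(s_{-i})$ there is $j\neq i$ with $s_j\notin\mathrm{BR}_j(s_{-j})$ and some $\hat s_j\in\mathrm{BR}_j(s_{-j})$ with $s_i\in\mathrm{BR}_i(\hat s_j,s_{-\{i,j\}})$; $ST(D)$ is the set of stable transitions. $\mathrm{PoSTA}=\min_{s\in ST(\mathrm{NE})}\mathrm{sw}(s)/\max_{s}\mathrm{sw}(s)$ and $\mathrm{PoA}=\min_{s\in\mathrm{NE}}\mathrm{sw}(s)/\max_s\mathrm{sw}(s)$. *)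

(* Defs.v *)
From HB Require Import structures.
From mathcomp Require Import all_boot all_order all_algebra.
Set Implicit Arguments. Unset Strict Implicit. Unset Printing Implicit Defensive.
Import Order.TTheory GRing.Theory Num.Theory.

Section Coord.
Variables (T : finType) (e : rel T).

Definition simple_graph : Prop := symmetric e /\ irreflexive e.

Definition nedges : nat := (#|[set p : T * T | e p.1 p.2]|)./2.

(* strategy profiles: each player picks one of two colours (false ~ 1, true ~ 2) *)
Definition profile := {ffun T -> bool}.

Definition util (s : profile) (i : T) : nat :=
  #|[set j | e i j && (s j == s i)]|.

Definition sw (s : profile) : nat := \sum_(i : T) util s i.

Definition upd (s : profile) (i : T) (c : bool) : profile :=
  [ffun j => if j == i then c else s j].

Definition BR (i : T) (s : profile) : {set bool} :=
  [set c : bool | [forall c' : bool, util (upd s i c') i <= util (upd s i c) i]].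

Definition is_NE (s : profile) : bool := [forall i, s i \in BR i s].

Definition is_transition_NE (t : profile) : bool :=
  [forall i, exists d : profile, is_NE d && (t i == d i)].

Definition is_stable (s : profile) : bool :=
  [forall i, (s i \notin BR i s) ==>
    [exists j, [&& j != i, s j \notin BR j s &
      [exists hj in BR j s, s i \in BR i (upd s j hj)]]]].

Definition is_ST_NE (s : profile) : bool := is_transition_NE s && is_stable s.

Definition opt_sw : nat := \max_(s : profile) sw s.

(* min over ST(NE) of sw (the default opt_sw is only used if ST(NE) is empty,
   which never happens since NE is nonempty and NE ⊆ ST(NE)) *)
Definition min_sw_ST : nat := \big[minn/opt_sw]_(s : profile | is_ST_NE s) sw s.
Definition min_sw_NE : nat :=
  \big[minn/opt_sw]_(s : profile | is_NE s) sw s.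

Definition PoSTA : rat := (min_sw_ST%:R / opt_sw%:R)%R.
Definition PoA : rat := (min_sw_NE%:R / opt_sw%:R)%R.

End Coord.

(* Main.v *)
Require Import Defs.
From mathcomp Require Import all_boot all_order all_algebra.
From mathcomp Require Import zify.
From mathcomp.algebra_tactics Require Import ring lra.
Import Order.TTheory GRing.Theory Num.Theory.

Section Gen.
Variables (T : finType) (e : rel T).
Hypothesis He : simple_graph e.

Definition cnt (s : profile T) i c := #|[set k | e i k && (s k == c)]|.
Definition deg i := #|[set k | e i k]|.
Definition Dsum := \sum_i deg i.

Lemma irr i : e i i = false.
Proof. by case: He => _ /(_ i). Qed.

Lemma util_upd_self s i c : util e (upd s i c) i = cnt s i c.
Proof.
rewrite /util /cnt; apply: eq_card => k; rewrite !inE !ffunE eqxx.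
by case: (eqVneq k i) => [->|//]; rewrite irr.
Qed.

Lemma BR_char s i c : (c \in BR e i s) = (cnt s i (~~ c) <= cnt s i c).
Proof.
rewrite inE; apply/forallP/idP => [H | H c'].
  by have := H (~~ c); rewrite !util_upd_self.
by rewrite !util_upd_self; case: c' c H => [] [].
Qed.

Lemma cnt_deg s i c : cnt s i c + cnt s i (~~ c) = deg i.
Proof.
rewrite /cnt /deg -(cardID [pred k | s k == c] [set k | e i k]).
congr (_ + _); apply: eq_card => k; rewrite !inE andbC //.
by case: (s k); case: c.
Qed.

Lemma util_cnt s i : util e s i = cnt s i (s i).
Proof. by []. Qed.

Lemma cnt_upd1 s i j h c : cnt (upd s j h) i c <= (cnt s i c).+1.
Proof.
rewrite /cnt -add1n.
apply: leq_trans (_ : #|j |: [set k | e i k && (s k == c)]| <= _).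
  apply: subset_leq_card; apply/subsetP => k; rewrite !inE ffunE.
  by case: (eqVneq k j).
by rewrite cardsU1 leq_add2r leq_b1.
Qed.

Lemma cnt_upd2 s i j h c : cnt s i c <= (cnt (upd s j h) i c).+1.
Proof.
rewrite /cnt -add1n.
apply: leq_trans (_ : #|j |: [set k | e i k && (upd s j h k == c)]| <= _).
  apply: subset_leq_card; apply/subsetP => k; rewrite !inE ffunE.
  by case: (eqVneq k j).
by rewrite cardsU1 leq_add2r leq_b1.
Qed.

Lemma stable_bound s i : is_stable e s -> deg i <= (util e s i).*2 + 2.
Proof.
move=> /forallP /(_ i); rewrite util_cnt -(cnt_deg s i (s i)).
case: (boolP (s i \in BR e i s)) => [|_ /= /existsP [j /and3P [ji _ /existsP [hj /andP [_ H]]]]].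
  by rewrite BR_char => ? _; rewrite -addnn; lia.
move: H; rewrite BR_char => H.
have h1 := cnt_upd1 s i j hj (s i).
have h2 := cnt_upd2 s i j hj (~~ s i).
rewrite -addnn; lia.
Qed.

Lemma NE_bound s i : is_NE e s -> deg i <= (util e s i).*2.
Proof.
move=> /forallP /(_ i); rewrite util_cnt -(cnt_deg s i (s i)) BR_char => H.
rewrite -addnn; lia.
Qed.

Lemma util_deg s i : util e s i <= deg i.
Proof. by apply: subset_leq_card; apply/subsetP => k; rewrite !inE => /andP []. Qed.

Lemma util_const b i : util e [ffun=> b] i = deg i.
Proof. by apply: eq_card => k; rewrite !inE !ffunE eqxx andbT. Qed.

Lemma opt_D : opt_sw e = Dsum.
Proof.
apply/eqP; rewrite eqn_leq; apply/andP; split.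
  apply/bigmax_leqP => s _; apply: leq_sum => i _; exact: util_deg.
apply: leq_trans (leq_bigmax (F := sw e) [ffun=> true]).
by rewrite /sw; under eq_bigr do rewrite util_const.
Qed.

Lemma card_sumb (U : finType) (P : pred U) : #|[set x | P x]| = \sum_x (P x : nat).
Proof.
rewrite -sum1_card big_mkcond /=; apply: eq_bigr => x _; rewrite inE; by case: (P x).
Qed.

Lemma pairs_D : #|[set p : T * T | e p.1 p.2]| = Dsum.
Proof.
rewrite (card_sumb _ (fun p : T * T => e p.1 p.2)) /Dsum.
rewrite -(pair_bigA _ (fun i j => nat_of_bool (e i j))).
by apply: eq_bigr => i _; rewrite /deg (card_sumb _ (e i)).
Qed.

Lemma const_NE b : is_NE e [ffun=> b].
Proof.
apply/forallP => i; rewrite BR_char ffunE /cnt.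
rewrite (_ : #|_| = 0) //; apply: eq_card0 => k; rewrite !inE ffunE.
by case: b; rewrite andbF.
Qed.

Lemma all_trans t : is_transition_NE e t.
Proof.
apply/forallP => i; apply/existsP; exists [ffun=> t i].
by rewrite const_NE ffunE eqxx.
Qed.


Lemma cnt_f (s : profile T) (f : T -> bool) i c : (forall x, s x = f x) ->
  cnt s i c = \sum_k (e i k && (f k == c) : nat).
Proof.
move=> H; rewrite /cnt (card_sumb _ (fun k => e i k && (s k == c))).
by apply: eq_bigr => k _; rewrite H.
Qed.

Lemma minST_bound : Dsum <= (min_sw_ST e).*2 + 2 * #|T|.
Proof.
rewrite /min_sw_ST; apply: (big_ind (fun x => Dsum <= x.*2 + 2 * #|T|)).
- rewrite opt_D -addnn; lia.
- move=> x y hx hy; rewrite /minn; by case: ifP.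
move=> s /andP [_ Hs].
apply: leq_trans (_ : \sum_i ((util e s i).*2 + 2) <= _).
  by apply: leq_sum => i _; apply: stable_bound.
rewrite big_split /= sum_nat_const /sw.
rewrite (big_morph double doubleD double0) /=.
rewrite mulnC; apply: leqnn.
Qed.

Lemma minNE_bound : Dsum <= (min_sw_NE e).*2.
Proof.
rewrite /min_sw_NE; apply: (big_ind (fun x => Dsum <= x.*2)).
- rewrite opt_D -addnn; lia.
- move=> x y hx hy; rewrite /minn; by case: ifP.
move=> s Hs.
apply: leq_trans (_ : \sum_i ((util e s i).*2) <= _).
  by apply: leq_sum => i _; apply: NE_bound.
by rewrite /sw (big_morph double doubleD double0).
Qed.

End Gen.

Lemma bigminn_le (I : eqType) (r : seq I) (P : pred I) (F : I -> nat) d x :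
  x \in r -> P x -> \big[minn/d]_(i <- r | P i) F i <= F x.
Proof.
move=> + Px; elim: r => //= y r IH; rewrite inE big_cons.
case/orP => [/eqP <-|xr]; first by rewrite Px geq_minl.
case: (P y); last exact: IH. by rewrite geq_min (IH xr) orbT.
Qed.


Lemma rat_aux (a n m D : nat) : (0 < m)%N -> (2 * m <= D)%N -> (D <= a.*2 + 2 * n)%N ->
  (1 / 2 - n%:R / (2 * m%:R) <= a%:R / D%:R :> rat)%R.
Proof.
move=> m0 mD Da.
have D0 : (0 < D)%N by lia.
have hD : (0 < D%:R :> rat)%R by rewrite ltr0n.
have hm : (0 < 2 * m%:R :> rat)%R by rewrite pmulr_rgt0 // ltr0n.
rewrite ler_pdivlMr //.
have hx : (1 <= D%:R / (2 * m%:R) :> rat)%R.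
  by rewrite ler_pdivlMr // mul1r -(natrM rat 2 m) ler_nat.
have Da' : (D%:R <= 2 * a%:R + 2 * n%:R :> rat)%R.
  by rewrite -!(natrM rat 2) -natrD ler_nat; rewrite -muln2 in Da; lia.
have n0 : (0 <= n%:R :> rat)%R by [].
have -> : ((1 / 2 - n%:R / (2 * m%:R)) * D%:R = D%:R / 2 - n%:R * (D%:R / (2 * m%:R)) :> rat)%R.
  by field; apply/eqP => h; move: hm; rewrite h ltxx.
set x := (D%:R / _)%R in hx *.
nra.
Qed.

Lemma rat_aux2 (a D : nat) : (0 < D)%N -> (D <= a.*2)%N -> (1 / 2 <= a%:R / D%:R :> rat)%R.
Proof.
move=> D0 Da.
rewrite ler_pdivlMr ?ltr0n //.
have : (D%:R <= 2 * a%:R :> rat)%R by rewrite -(natrM rat 2) ler_nat; rewrite -muln2 in Da; lia.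
lra.
Qed.

Definition e4 : rel 'I_4 := fun i j => ((i + 1) %% 4 == j) || ((j + 1) %% 4 == i).
Definition s0 : profile 'I_4 := [ffun i : 'I_4 => odd i].
Definition s1 : profile 'I_4 := [ffun i : 'I_4 => 1 < i].

Lemma e4_simple : simple_graph e4.
Proof.
split; first by move=> i j; rewrite /e4 orbC.
by move=> [[|[|[|[|//]]]] Hi].
Qed.

Lemma util_f (T : finType) (e : rel T) (s : profile T) (f : T -> bool) i :
  (forall x, s x = f x) -> util e s i = \sum_k (e i k && (f k == f i) : nat).
Proof.
move=> H; rewrite /util (card_sumb T (fun k => e i k && (s k == s i))).
by apply: eq_bigr => k _; rewrite !H.
Qed.

Lemma D4 : Dsum _ e4 = 8.
Proof.
rewrite /Dsum /deg; under eq_bigr => i _ do rewrite (card_sumb _ (e4 i)).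
by rewrite !big_ord_recl !big_ord0.
Qed.

Lemma nedges4 : nedges e4 = 4.
Proof. by rewrite /nedges pairs_D D4. Qed.

Lemma Hs0 : forall x, s0 x = odd x. Proof. by move=> x; rewrite ffunE. Qed.
Lemma Hs1 : forall x : 'I_4, s1 x = (1 < x). Proof. by move=> x; rewrite ffunE. Qed.

Lemma sw_s0 : sw e4 s0 = 0.
Proof.
rewrite /sw; under eq_bigr => i _ do rewrite (util_f _ _ _ _ _ Hs0).
by rewrite !big_ord_recl !big_ord0.
Qed.

Lemma sw_s1 : sw e4 s1 = 4.
Proof.
rewrite /sw; under eq_bigr => i _ do rewrite (util_f _ _ _ _ _ Hs1).
by rewrite !big_ord_recl !big_ord0.
Qed.

Lemma NE_s1 : is_NE e4 s1.
Proof.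
apply/forallP => i; rewrite (BR_char _ _ e4_simple) ffunE.
rewrite !(cnt_f _ _ _ _ _ _ Hs1).
by case: i => [[|[|[|[|//]]]] Hi]; rewrite !big_ord_recl !big_ord0.
Qed.

Lemma stable_s0 : is_stable e4 s0.
Proof.
apply/forallP => i; apply/implyP => _; apply/existsP.
have go : forall j : 'I_4, j != i -> e4 i j ->
  [&& j != i, s0 j \notin BR e4 j s0
   & [exists hj in BR e4 j s0, s0 i \in BR e4 i (upd s0 j hj)]].
  move=> j ji eij; rewrite ji /=.
  rewrite (BR_char _ _ e4_simple) !(cnt_f _ _ _ _ _ _ Hs0) Hs0.
  apply/andP; split.
    by move: j {ji eij} => [[|[|[|[|//]]]] Hj]; rewrite !big_ord_recl !big_ord0.
  apply/existsP; exists (~~ odd j).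
  have Hu : forall x, upd s0 j (~~ odd j) x = (fun k => if k == j then ~~ odd j else odd k) x.
    by move=> x; rewrite !ffunE.
  rewrite !(BR_char _ _ e4_simple) ?(cnt_f _ _ _ _ _ _ Hs0) ?(cnt_f _ _ _ _ _ _ Hu) ?Hs0.
  clear Hu; move: i j ji eij => [[|[|[|[|//]]]] Hi] [[|[|[|[|//]]]] Hj] //= _ _;
    by rewrite !big_ord_recl !big_ord0.
case: i go => [[|[|[|[|//]]]] Hi] go.
- by exists (@Ordinal 4 1 isT); apply: go.
- by exists (@Ordinal 4 2 isT); apply: go.
- by exists (@Ordinal 4 3 isT); apply: go.
- by exists (@Ordinal 4 0 isT); apply: go.
Qed.
Local Open Scope ring_scope.

Theorem theorem4 :
  (forall (T : finType) (e : rel T), simple_graph e -> (0 < nedges e)%N ->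
     (1 / 2 - (#|T|%:R / (2 * (nedges e)%:R)) <= PoSTA e)
     /\ (1 / 2 <= PoA e))
  /\ (exists (n : nat) (e : rel 'I_n), simple_graph e /\ (0 < nedges e)%N /\
        PoSTA e = 1 / 2 - (n%:R / (2 * (nedges e)%:R)))
  /\ (exists (n : nat) (e : rel 'I_n), simple_graph e /\ (0 < nedges e)%N /\
        PoA e = 1 / 2).
Proof.
split; [|split].
- move=> T e He m0.
  have hm : (2 * nedges e <= Dsum T e)%N.
    rewrite /nedges pairs_D //.
    have := odd_double_half (Dsum T e); rewrite -addnn; lia.
  split.
    rewrite /PoSTA (opt_D T e); apply: rat_aux => //.
    exact: (minST_bound _ _ He).
  rewrite /PoA (opt_D T e); apply: rat_aux2; first by lia.
  exact: (minNE_bound _ _ He).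
- exists 4%N, e4; split; first exact: e4_simple.
  rewrite nedges4; split => //; rewrite /PoSTA.
  have -> : min_sw_ST e4 = 0%N.
    have HST : is_ST_NE e4 s0 by rewrite /is_ST_NE (all_trans _ _ e4_simple) stable_s0.
    have := bigminn_le _ (index_enum _) (is_ST_NE e4) (sw e4) (opt_sw e4) _ (mem_index_enum s0) HST.
    by rewrite sw_s0 leqn0 => /eqP.
  by rewrite mul0r; field.
- exists 4%N, e4; split; first exact: e4_simple.
  rewrite nedges4; split => //; rewrite /PoA.
  have -> : min_sw_NE e4 = 4%N.
    apply/eqP; rewrite eqn_leq; apply/andP; split.
      have := bigminn_le _ (index_enum _) (is_NE e4) (sw e4) (opt_sw e4) _ (mem_index_enum s1) NE_s1.
      by rewrite sw_s1.
    have := minNE_bound _ _ e4_simple; rewrite D4; lia.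
  by rewrite (opt_D _ e4) D4; field.
Qed.
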